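(* Let $V$ be a set of $n$ points with a dot-product similarity matrix $C$ (i.e. $C_{ij}=x_i\cdot x_j$ for unit vectors $x_i\in\mathbb{R}^d$) such that $0\le C_{ij}\le1$ for all $i,j$. Let $T$ be the (random) hierarchy produced by the top-down recursive partitioning procedure using the random-hyperplane splitting rule, and let $T^*$ be a minimizer of $\mathrm{cost}_V(\cdot)$. Then $\mathbb{E}[\mathrm{cost}_V(T)]=O(n)\cdot\mathrm{cost}_V(T^* )$, i.e. the random hyperplane partitioning has expected approximation ratio $O(n)$.
   Context: Hierarchical clustering cost (Dasgupta): for a rooted tree $T$ with leaf set $V$, $\mathrm{cost}_V(T)=\sum_{\{i,j\}}C_{ij}|\mathrm{leaves}(T[i\vee j])|$ over unordered pairs of elements of $V$, where $i\vee j$ is the lowest common ancestor of leaves $i,j$ and $T[u]$ the subtree rooted at $u$. Top-down procedure: for a point set $S$, return a leaf if $|S|=1$, otherwise split $S$ into two nonempty parts by the splitting rule and make the recursively built trees on the parts the children of the root. Random-hyperplane splitting rule on a set $\{v_1,\dots,v_\ell\}$: sample $h$ uniformly from the unit sphere $S^{d-1}$ (e.g. $h=y/\|y\|$ with $y\sim\mathcal N(0,I_d)$), and split the points according to whether $h\cdot v_i$ is at most the median of $\{h\cdot v_1,\dots,h\cdot v_\ell\}$. *)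

(* Defs.v *)
From HB Require Import structures.
From mathcomp Require Import all_boot all_order all_algebra.
From mathcomp Require Import all_classical all_reals all_analysis.
Set Implicit Arguments. Unset Strict Implicit. Unset Printing Implicit Defensive.
Import Order.TTheory GRing.Theory Num.Theory.
Local Open Scope ring_scope.

Inductive tree (T : Type) := Leaf of T | Node of seq (tree T).
Arguments Leaf {T}. Arguments Node {T}.

Fixpoint leaves {T} (t : tree T) : seq T :=
  match t with
  | Leaf i => [:: i]
  | Node ts => (fix lv (us : seq (tree T)) : seq T :=
                  match us with [::] => [::] | u :: us' => leaves u ++ lv us' end) ts
  end.

(* every internal node has at least one child (so all leaves of the tree are
   Leaf-labelled nodes) *)
Fixpoint wf_tree {T} (t : tree T) : bool :=
  match t with
  | Leaf _ => true
  | Node ts => ~~ nilp ts &&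
      (fix wl (us : seq (tree T)) : bool :=
         match us with [::] => true | u :: us' => wf_tree u && wl us' end) ts
  end.

Definition hierarchy (n : nat) (t : tree 'I_n) : bool :=
  wf_tree t && perm_eq (leaves t) (enum 'I_n).

(* |leaves(T[i v j])| : number of leaves of the subtree rooted at the lowest
   common ancestor of leaves i and j *)
Fixpoint lca_size {T : eqType} (t : tree T) (i j : T) : nat :=
  match t with
  | Leaf _ => 1
  | Node ts =>
      (fix go (us : seq (tree T)) : nat :=
         match us with
         | [::] => size (leaves t)
         | u :: us' => if (i \in leaves u) && (j \in leaves u)
                       then lca_size u i j else go us'
         end) ts
  end.

Definition cost {R : numDomainType} (n : nat) (C : 'I_n -> 'I_n -> R)
    (t : tree 'I_n) : R :=
  \sum_(i < n) \sum_(j < n | (i < j)%N) C i j * (lca_size t i j)%:R.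

Definition dot {R : realType} (d : nat) (u v : 'rV[R]_d) : R := (u *m v^T) 0 0.
Definition enorm {R : realType} (d : nat) (u : 'rV[R]_d) : R := Num.sqrt (dot u u).

Definition median {R : realType} (s : seq R) : R :=
  let t := sort <=%R s in
  let m := size t in
  if odd m then nth 0 t m./2
  else (nth 0 t m./2.-1 + nth 0 t m./2) / 2.

(* h = y / ||y|| with y ~ N(0, I_d); the part "at most the median" *)
Definition hyp_split {R : realType} (n d : nat) (x : 'I_n -> 'rV[R]_d)
    (y : 'rV[R]_d) (S : {set 'I_n}) : {set 'I_n} :=
  let h := (enorm y)^-1 *: y in
  let med := median [seq dot h (x i) | i <- enum S] in
  [set i in S | dot h (x i) <= med].

(* Expectation of g(y) for y ~ N(0, I_d), i.e. w.r.t. the product of d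
   independent standard normal laws, computed as an iterated integral. *)
Fixpoint gauss_iter {R : realType} (k : nat) (f : seq R -> \bar R) : \bar R :=
  match k with
  | 0 => f [::]
  | k'.+1 => (\int[normal_prob (0:R) 1]_t gauss_iter k' (fun l => f (t :: l)))%E
  end.

Definition gauss_expect {R : realType} (d : nat) (g : 'rV[R]_d -> \bar R) : \bar R :=
  gauss_iter d (fun l => g (\row_(i < d) nth 0 l i)).

Definition split_prob {R : realType} (n d : nat) (x : 'I_n -> 'rV[R]_d)
    (S A : {set 'I_n}) : \bar R :=
  gauss_expect (fun y => ((hyp_split x y S == A)%:R)%:E).

(* Law of the random tree produced by the top-down procedure on S, as a
   finitely supported distribution: list of (probability, tree) pairs.
   Splits at distinct nodes use independent hyperplanes.  k is fuel (k >= #|S|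
   suffices).  Events of probability zero (a part being empty, which requires
   ties) are omitted. *)
Fixpoint rtree_dist {R : realType} (n d : nat) (x : 'I_n -> 'rV[R]_d)
    (k : nat) (S : {set 'I_n}) : seq (\bar R * tree 'I_n) :=
  match k with
  | 0 => [::]
  | k'.+1 =>
    if #|S| == 1%N then
      match [pick i in S] with Some i => [:: (1%E, Leaf i)] | None => [::] end
    else
      flatten [seq [seq ((split_prob x S A * pt1.1 * pt2.1)%E,
                         Node [:: pt1.2; pt2.2])
                   | pt1 <- rtree_dist x k' A, pt2 <- rtree_dist x k' (S :\: A)]
              | A : {set 'I_n} <- enum (powerset S) & (0 < #|A| < #|S|)%N]
  end.

Definition dotC {R : realType} (n d : nat) (x : 'I_n -> 'rV[R]_d) :=
  fun i j : 'I_n => dot (x i) (x j).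

Definition expected_cost {R : realType} (n d : nat) (x : 'I_n -> 'rV[R]_d) : \bar R :=
  (\sum_(pt <- rtree_dist x n [set: 'I_n]) pt.1 * (cost (dotC x) pt.2)%:E)%E.

(* Main.v *)
Require Import Defs.
From HB Require Import structures.
From mathcomp Require Import all_boot all_order all_algebra.
From mathcomp Require Import all_classical all_reals all_analysis.
Import Order.TTheory GRing.Theory Num.Theory.
Local Open Scope ring_scope.

Section Sup.
Local Open Scope ereal_scope.
Context {R : realType}.
Lemma sup_add (SA SB SC : set (\bar R)) :
  SA 0 -> SB 0 -> (forall a, SA a -> 0 <= a) -> (forall b, SB b -> 0 <= b) ->
  (forall a b, SA a -> SB b -> a + b <= ereal_sup SC) ->
  ereal_sup SA + ereal_sup SB <= ereal_sup SC.
Proof.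
move=> A0 B0 HA HB Hab.
have c0 : 0 <= ereal_sup SC by rewrite -(adde0 0); exact: Hab.
have [->|cy] := eqVneq (ereal_sup SC) +oo; first exact: leey.
have cfin : ereal_sup SC \is a fin_num by rewrite ge0_fin_numE // ltey.
have bfin b : SB b -> b \is a fin_num.
  move=> Bb; rewrite ge0_fin_numE ?HB //; apply: (le_lt_trans _ (_ : ereal_sup SC < +oo)); last by rewrite ltey.
  by rewrite -(add0e b); exact: Hab.
have supA0 : 0 <= ereal_sup SA by exact: ereal_sup_ubound.
have supAc : ereal_sup SA <= ereal_sup SC.
  by apply: ge_ereal_sup => a Aa; rewrite -(adde0 a); exact: Hab.
have Afin : ereal_sup SA \is a fin_num.
  by rewrite ge0_fin_numE //; apply: (le_lt_trans supAc); rewrite ltey.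
rewrite addeC -leeBrDr //.
apply: ge_ereal_sup => b Bb.
rewrite leeBrDr // addeC -leeBrDr ?bfin //.
apply: ge_ereal_sup => a Aa.
by rewrite leeBrDr ?bfin //; exact: Hab.
Qed.
End Sup.

Section Int.
Local Open Scope ereal_scope.
Context d (T : measurableType d) (R : realType) (mu : {measure set T -> \bar R}).
Import HBNNSimple.

Lemma int_mono (f g : T -> \bar R) : (forall x, 0 <= f x) -> (forall x, f x <= g x) ->
  \int[mu]_x f x <= \int[mu]_x g x.
Proof.
move=> f0 fg; have g0 x : 0 <= g x by exact: le_trans (f0 x) (fg x).
rewrite !ge0_integralTE //=.
apply: ereal_sup_le => _ [h /= hf <-]; exists h => //= x.
exact: le_trans (hf x) (fg x).
Qed.

Lemma int_superadd (f g : T -> \bar R) : (forall x, 0 <= f x) -> (forall x, 0 <= g x) ->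
  \int[mu]_x f x + \int[mu]_x g x <= \int[mu]_x (f x + g x).
Proof.
move=> f0 g0; rewrite !ge0_integralTE //=; last by move=> x; exact: adde_ge0.
apply: sup_add.
- by exists nnsfun0 => //; exact: sintegral0.
- by exists nnsfun0 => //; exact: sintegral0.
- by move=> _ [h _ <-]; exact: sintegral_ge0.
- by move=> _ [h _ <-]; exact: sintegral_ge0.
move=> _ _ [h1 /= h1f <-] [h2 /= h2g <-].
rewrite -sintegralD; apply: ereal_sup_ubound; exists (add_nnsfun h1 h2) => //= x.
by rewrite EFinD; exact: leeD.
Qed.
End Int.

Section Gauss.
Local Open Scope ereal_scope.
Context {R : realType}.
Implicit Types f g : seq R -> \bar R.

Lemma gi_ge0 k f : (forall l, 0 <= f l) -> 0 <= gauss_iter k f.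
Proof.
elim: k f => [|k IH] f f0 /=; first exact: f0.
by apply: integral_ge0 => t _; apply: IH => l.
Qed.

Lemma gi_mono k f g : (forall l, 0 <= f l) -> (forall l, f l <= g l) ->
  gauss_iter k f <= gauss_iter k g.
Proof.
elim: k f g => [|k IH] f g f0 fg /=; first exact: fg.
apply: int_mono => t; first by apply: gi_ge0.
by apply: IH.
Qed.

Lemma gi_superadd k f g : (forall l, 0 <= f l) -> (forall l, 0 <= g l) ->
  gauss_iter k f + gauss_iter k g <= gauss_iter k (fun l => f l + g l).
Proof.
elim: k f g => [|k IH] f g f0 g0 //=.
apply: le_trans; first apply: int_superadd => t; try by apply: gi_ge0.
apply: int_mono => t; last by apply: IH.
by apply: adde_ge0; apply: gi_ge0.
Qed.

Lemma gi_le1 k f : (forall l, 0 <= f l) -> (forall l, f l <= 1) -> gauss_iter k f <= 1.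
Proof.
elim: k f => [|k IH] f f0 f1 //=.
apply: le_trans; first apply: (@int_mono _ _ _ _ _ (cst 1)) => t.
- by apply: gi_ge0.
- by apply: IH.
rewrite integral_cst // mul1e; apply: probability_le1; exact: measurableT. Qed.

Lemma gi_sum k (I : Type) (s : seq I) (P : pred I) (F : I -> seq R -> \bar R) :
  (forall i l, 0 <= F i l) ->
  \sum_(i <- s | P i) gauss_iter k (F i) <= gauss_iter k (fun l => \sum_(i <- s | P i) F i l).
Proof.
move=> F0; elim: s => [|i s IH].
  by rewrite big_nil; apply: gi_ge0 => l; rewrite big_nil.
rewrite big_cons (_ : (fun l => _) = (fun l => if P i then F i l + \sum_(j <- s | P j) F j l else \sum_(j <- s | P j) F j l)); last by apply: funext => l; rewrite big_cons.
case: (P i) => //.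
apply: le_trans; first exact: leeD2l IH.
apply: gi_superadd => // l; exact: sume_ge0.
Qed.
End Gauss.

Lemma sum_eq_le (T : eqType) (v : T) (s : seq T) (P : pred T) : uniq s ->
  (\sum_(A <- s | P A) (v == A) <= (v \in s))%N.
Proof.
elim: s => [|a s IH] /=; first by rewrite big_nil.
move=> /andP[an us]; rewrite big_cons in_cons.
have := IH us; case: (P a); case: eqP => [->|_]; rewrite ?(negbTE an) /= ?add0n ?leqn0 //.
- by move=> /eqP ->.
- by move=> /eqP ->.
Qed.

Section Split.
Local Open Scope ereal_scope.
Context {R : realType}.

Lemma split_sum n d (x : 'I_n -> 'rV[R]_d) S (s : seq {set 'I_n}) (P : pred {set 'I_n}) :
  uniq s -> \sum_(A <- s | P A) split_prob x S A <= 1.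
Proof.
move=> us; rewrite /split_prob /gauss_expect.
apply: le_trans; first apply: gi_sum => A l; first by rewrite lee_fin.
apply: gi_le1 => l; first by apply: sume_ge0 => A _; rewrite lee_fin.
rewrite sumEFin lee_fin -natr_sum (_ : 1%R = 1%:R) // ler_nat.
apply: leq_trans (leq_b1 (hyp_split x (\row_i0 (l`_i0)%R) S \in s)); exact: sum_eq_le.
Qed.
End Split.

Lemma all_allpairs (A B C : Type) (p : pred A) (q : pred B) (r : pred C) (f : A -> B -> C) s t :
  all p s -> all q t -> (forall a b, p a -> q b -> r (f a b)) ->
  all r [seq f a b | a <- s, b <- t].
Proof.
move=> ps qt H; elim: s ps => //= a s IH /andP[pa ps].
rewrite all_cat IH // andbT.
clear IH ps; elim: t qt => //= b t IHt /andP[qb qt]; rewrite H //=; exact: IHt.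
Qed.

Lemma all_flat (A : Type) (p : pred A) (ss : seq (seq A)) :
  all (all p) ss -> all p (flatten ss).
Proof. by elim: ss => //= s ss IH /andP[ps pss]; rewrite all_cat ps IH. Qed.

Section Dist.
Local Open Scope ereal_scope.
Context {R : realType}.

Lemma sum_ge0_all (I : Type) (F : I -> \bar R) (s : seq I) :
  all (fun i => 0 <= F i) s -> 0 <= \sum_(i <- s) F i.
Proof.
elim: s => [|a s IH] /=; first by rewrite big_nil.
by move=> /andP[a0 s0]; rewrite big_cons adde_ge0 // IH.
Qed.

Lemma lee_sum_all (I : Type) (p : pred I) (F G : I -> \bar R) (s : seq I) :
  all p s -> (forall i, p i -> F i <= G i) ->
  \sum_(i <- s) F i <= \sum_(i <- s) G i.
Proof.
move=> ps H; elim: s ps => [|a s IH] /=; first by rewrite !big_nil.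
by move=> /andP[pa ps]; rewrite !big_cons leeD // ?H // IH.
Qed.

Lemma sum_distr (I : Type) (F : I -> \bar R) (s : seq I) (c : \bar R) :
  all (fun i => 0 <= F i) s ->
  \sum_(i <- s) c * F i = c * \sum_(i <- s) F i.
Proof.
elim: s => [|a s IH] /=; first by rewrite !big_nil mule0.
move=> /andP[a0 s0]; rewrite !big_cons IH // ge0_muleDr //.
exact: sum_ge0_all.
Qed.
End Dist.

Section Tree.
Local Open Scope ereal_scope.
Context {R : realType} (n d : nat) (x : 'I_n -> 'rV[R]_d).

Definition good (m : nat) (pt : \bar R * tree 'I_n) : bool :=
  (0 <= pt.1) && [forall i, [forall j, (lca_size pt.2 i j <= m)%N]] && (size (leaves pt.2) <= m)%N.

Lemma split_prob_ge0 S A : 0 <= split_prob x S A.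
Proof. by apply: gi_ge0 => l; rewrite lee_fin. Qed.

Lemma rdist_good k (S : {set 'I_n}) : all (good #|S|) (rtree_dist x k S) &&
  (\sum_(pt <- rtree_dist x k S) pt.1 <= 1).
Proof.
elim: k S => [|k IH] S; first by rewrite /= big_nil.
rewrite [rtree_dist _ _ _]/=.
case: ifP => [/eqP S1|S1].
  case: pickP => [i iS|_] /=; last by rewrite big_nil.
  rewrite big_cons big_nil adde0 lexx /good /= S1 lee01 /= !andbT.
  by apply/forallP => a; apply/forallP.
apply/andP; split.
- apply: all_flat; rewrite all_map; apply/allP => A.
  rewrite mem_filter => /andP[/andP[A0 AS] Ain].
  have AsubS : A \subset S by rewrite -powersetE -mem_enum.
  have cardS : (#|A| + #|S :\: A|)%N = #|S|.
    by rewrite -(cardsID A S); congr (_ + _)%N; apply/eq_card => z; rewrite inE; case zA: (z \in A); rewrite ?andbF ?andbT // (fintype.subsetP AsubS).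
  have /andP[g1 _] := IH A; have /andP[g2 _] := IH (S :\: A).
  apply: all_allpairs g1 g2 _ => pt1 pt2.
  rewrite /good => /andP[/andP[p10 l1] s1] /andP[/andP[p20 l2] s2] /=.
  have sz : (size (leaves pt1.2 ++ leaves pt2.2 ++ [::]) <= #|S|)%N.
    by rewrite cats0 size_cat -cardS leq_add.
  rewrite sz andbT mule_ge0 ?mule_ge0 ?split_prob_ge0 //=.
  apply/forallP => i; apply/forallP => j.
  case: ifP => _.
    move/forallP: l1 => /(_ i)/forallP/(_ j) h.
    by apply: leq_trans h _; rewrite -cardS leq_addr.
  case: ifP => _ //.
  move/forallP: l2 => /(_ i)/forallP/(_ j) h.
  by apply: leq_trans h _; rewrite -cardS leq_addl.
- rewrite big_flatten big_map /= big_filter.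
  have H := split_sum _ _ x S (enum (powerset S)) (fun A : {set 'I_n} => (0 < #|A| < #|S|)%N) (enum_uniq _).
  apply: le_trans H.
  apply: lee_sum => A _.
  have /andP[g1 sum1] := IH A; have /andP[g2 sum2] := IH (S :\: A).
  have n1 : all (fun pt => 0 <= pt.1) (rtree_dist x k A).
    by apply: sub_all g1 => pt /andP[/andP[]].
  have n2 : all (fun pt => 0 <= pt.1) (rtree_dist x k (S :\: A)).
    by apply: sub_all g2 => pt /andP[/andP[]].
  rewrite big_allpairs_dep /=.
  apply: (@le_trans _ _ (\sum_(pt1 <- rtree_dist x k A) (split_prob x S A * pt1.1))).
    apply: (@lee_sum_all _ _ _ _ _ _ n1) => pt1 p10.
    rewrite sum_distr //.
    rewrite -[X in _ <= X]mule1; apply: lee_wpmul2l => //.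
    by rewrite mule_ge0 ?split_prob_ge0.
  rewrite sum_distr //.
  rewrite -[X in _ <= X]mule1; apply: lee_wpmul2l => //.
  exact: split_prob_ge0.
Qed.
End Tree.

Fixpoint allL {T} (P : tree T -> Prop) (ts : seq (tree T)) : Prop :=
  match ts with [::] => True | u :: us => P u /\ allL P us end.

Fixpoint tree_ind' {T} (P : tree T -> Prop) (HL : forall a, P (Leaf a))
  (HN : forall ts, allL P ts -> P (Node ts)) (t : tree T) : P t :=
  match t with
  | Leaf a => HL a
  | Node ts => HN ts ((fix F (us : seq (tree T)) : allL P us :=
                         match us return allL P us with [::] => I | u :: us' => conj (tree_ind' P HL HN u) (F us') end) ts)
  end.

Lemma lca_pos (T : eqType) (i j : T) (t : tree T) :
  i \in leaves t -> (0 < lca_size t i j)%N.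
Proof.
move: t; apply: tree_ind' => [a _|ts Hts iin] //.
have b0 : (0 < size (leaves (Node ts)))%N by case: (leaves (Node ts)) iin.
have H : forall us, allL (fun t => i \in leaves t -> (0 < lca_size t i j)%N) us ->
  (0 < (fix go (us : seq (tree T)) : nat :=
         match us with
         | [::] => size (leaves (Node ts))
         | u :: us' => if (i \in leaves u) && (j \in leaves u)
                       then lca_size u i j else go us'
         end) us)%N.
  elim => [|u us IH] //= [Hu Hus].
  case: ifP => [/andP[iu _]|_]; first exact: Hu.
  exact: IH.
exact: H.
Qed.

Section Final.
Context {R : realType} (n : nat) (C : 'I_n -> 'I_n -> R).
Hypothesis C0 : forall i j, 0 <= C i j.
Let Csum := \sum_(i < n) \sum_(j < n | (i < j)%N) C i j.

Lemma cost_ub (t : tree 'I_n) : (forall i j, (lca_size t i j <= n)%N) ->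
  cost C t <= n%:R * Csum.
Proof.
move=> H; rewrite /cost /Csum mulr_sumr; apply: ler_sum => i _.
rewrite mulr_sumr; apply: ler_sum => j _.
by rewrite mulrC; apply: ler_wpM2r => //; rewrite ler_nat.
Qed.

Lemma cost_lb (t : tree 'I_n) : hierarchy t -> Csum <= cost C t.
Proof.
move=> /andP[_ pe]; rewrite /cost /Csum; apply: ler_sum => i _.
apply: ler_sum => j _; apply: ler_peMr => //.
rewrite ler1n; apply: lca_pos.
by rewrite (perm_mem pe) mem_enum.
Qed.

Lemma Csum_ge0 : 0 <= Csum.
Proof. by apply: sumr_ge0 => i _; apply: sumr_ge0. Qed.
End Final.

Theorem theorem6 (R : realType) :
  exists c : R, 0 < c /\
  forall (n d : nat) (x : 'I_n -> 'rV[R]_d),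
    injective x ->
    (forall i, dot (x i) (x i) = 1) ->
    (forall i j, 0 <= dot (x i) (x j) <= 1) ->
    forall Tstar : tree 'I_n, hierarchy Tstar ->
    (forall T : tree 'I_n, hierarchy T -> cost (dotC x) Tstar <= cost (dotC x) T) ->
    (expected_cost x <= (c * n%:R * cost (dotC x) Tstar)%:E)%E.
Proof.
exists 1; split => // n d x _ _ Hdot Tstar hT _.
have C0 : forall i j, 0 <= dotC x i j by move=> i j; case/andP: (Hdot i j).
set Cs := \sum_(i < n) \sum_(j < n | (i < j)%N) dotC x i j.
have /andP[g s1] := @rdist_good _ _ _ x n [set: 'I_n].
rewrite cardsT card_ord in g.
have nn : all (fun pt => (0 <= pt.1)%E) (rtree_dist x n [set: 'I_n]).
  by apply: sub_all g => pt /andP[/andP[]].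
rewrite /expected_cost.
apply: (@le_trans _ _ (\sum_(pt <- rtree_dist x n [set: 'I_n]) (n%:R * Cs)%:E * pt.1)%E).
  apply: (@lee_sum_all _ _ _ _ _ _ g) => pt /andP[/andP[p0 l] _].
  rewrite muleC; apply: lee_wpmul2r => //; rewrite lee_fin.
  apply: cost_ub => // i j.
  by move/forallP: l => /(_ i)/forallP/(_ j).
rewrite sum_distr //.
apply: (@le_trans _ _ ((n%:R * Cs)%:E * 1)%E).
  by apply: lee_wpmul2l => //; rewrite lee_fin mulr_ge0 // Csum_ge0.
rewrite mule1 lee_fin mul1r; apply: ler_wpM2l => //.
exact: cost_lb.
Qed.
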